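(* Let $\hat{\mathbf{Z}}\in\mathbb{R}^{d\times d}$ be symmetric with $\hat{\mathbf{Z}}_{J,J}=\hat{\mathbf{z}}\hat{\mathbf{z}}^\top$. Suppose: (1) either $\mathrm{sign}(u_{1,i})=\mathrm{sign}(\hat x_i)$ for all $i\in J$, or $\mathrm{sign}(u_{1,i})=-\mathrm{sign}(\hat x_i)$ for all $i\in J$; (2) $(\mathbf{M}_{J^c,J}-\rho\hat{\mathbf{Z}}_{J^c,J})\hat{\mathbf{x}}=0$ and $\|\hat{\mathbf{Z}}_{J^c,J}\|_{\max}<1$; (3) $\lambda_1(\mathbf{M}_{J,J}-\rho\hat{\mathbf{z}}\hat{\mathbf{z}}^\top)=\lambda_1(\mathbf{M}-\rho\hat{\mathbf{Z}})$ and $\|\hat{\mathbf{Z}}_{J^c,J^c}\|_{\max}<1$; (4) $\lambda_1(\mathbf{M}_{J,J}-\rho\hat{\mathbf{z}}\hat{\mathbf{z}}^\top)>\lambda_2(\mathbf{M}_{J,J}-\rho\hat{\mathbf{z}}\hat{\mathbf{z}}^\top)$. Then the matrix $\hat{\mathbf{X}}$ with $\hat{\mathbf{X}}_{J,J}=\hat{\mathbf{x}}\hat{\mathbf{x}}^\top$ and zeros elsewhere is the unique optimal solution of the SDP problem, and $\mathrm{supp}(\mathrm{diag}(\hat{\mathbf{X}}))=J$.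
   Context: Setup. Let $d\ge2$. $\mathbf{M}^*\in\mathbb{R}^{d\times d}$ is symmetric with $\lambda_1(\mathbf{M}^* )>\lambda_2(\mathbf{M}^* )$; $\mathbf{u}_1$ is a unit eigenvector for $\lambda_1(\mathbf{M}^* )$; $J=\{i:u_{1,i}\ne0\}$, $s=|J|\ge2$, $J^c=[d]\setminus J$. $\mathbf{M}\in\mathbb{R}^{d\times d}$ is any symmetric matrix (the observed matrix), and $\rho>0$. For a symmetric matrix, $\lambda_k$ is its $k$-th largest eigenvalue. Sub-matrices $\mathbf{B}_{I,K}$ are rows in $I$, columns in $K$; $\|\mathbf{B}\|_{\max}=\max_{i,j}|B_{i,j}|$, $\|\mathbf{B}\|_{1,1}=\sum_{i,j}|B_{i,j}|$; $\mathrm{sign}(0)=0$. SDP problem: maximize $\langle\mathbf{M},\mathbf{X}\rangle-\rho\|\mathbf{X}\|_{1,1}$ over symmetric $\mathbf{X}\succeq0$ with $\mathrm{tr}(\mathbf{X})=1$. Witness objects: $\hat{\mathbf{z}}\in\mathbb{R}^J$ with $\hat z_i=\mathrm{sign}(u_{1,i})$; $\hat{\mathbf{x}}\in\mathbb{R}^J$ is a unit leading eigenvector of $\mathbf{M}_{J,J}-\rho\hat{\mathbf{z}}\hat{\mathbf{z}}^\top$. *)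

(* Defs.v *)
From HB Require Import structures.
From mathcomp Require Import all_boot all_order all_algebra.
From mathcomp Require Import reals.
From Stdlib Require Import ClassicalEpsilon.
Set Implicit Arguments. Unset Strict Implicit. Unset Printing Implicit Defensive.
Import Order.TTheory GRing.Theory Num.Theory.
Local Open Scope ring_scope.

Section Defs.
Variable R : realType.

(* The k-th element (0-based) of the subset J of 'I_d, in increasing order. *)
Definition subidx (d : nat) (J : {set 'I_d}) (k : 'I_#|J|) : 'I_d := enum_val k.

Definition subM (d : nat) (B : 'M[R]_d) (I K : {set 'I_d}) : 'M[R]_(#|I|, #|K|) :=
  \matrix_(i < #|I|, j < #|K|) B (subidx i) (subidx j).

Definition is_spectrum (n : nat) (A : 'M[R]_n) (s : seq R) : Prop :=
  sorted (fun x y => y <= x) s /\ char_poly A = \prod_(x <- s) ('X - x%:P).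

Definition eigs (n : nat) (A : 'M[R]_n) : seq R :=
  epsilon (inhabits [::]) (is_spectrum A).

(* lam k A = k-th largest eigenvalue (k >= 1) *)
Definition lam (k : nat) (n : nat) (A : 'M[R]_n) : R := nth 0 (eigs A) k.-1.

Definition psd (n : nat) (X : 'M[R]_n) : Prop :=
  forall v : 'cV[R]_n, 0 <= (v^T *m X *m v) 0 0.

Definition sdp_feasible (n : nat) (X : 'M[R]_n) : Prop :=
  X^T = X /\ psd X /\ \tr X = 1.

Definition sdp_obj (n : nat) (M : 'M[R]_n) (rho : R) (X : 'M[R]_n) : R :=
  \sum_i \sum_j M i j * X i j - rho * \sum_i \sum_j `|X i j|.

Definition unique_optimal (n : nat) (M : 'M[R]_n) (rho : R) (X : 'M[R]_n) : Prop :=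
  sdp_feasible X /\
  forall Y : 'M[R]_n, sdp_feasible Y -> Y <> X -> sdp_obj M rho Y < sdp_obj M rho X.

End Defs.

(* Main.v *)
Require Import Defs.
From HB Require Import structures.
From mathcomp Require Import all_boot all_order all_algebra.
From mathcomp Require Import reals ring lra.
From mathcomp.real_closed Require Import complex.
From Stdlib Require Import ClassicalEpsilon.
Import Num.Def Order.TTheory GRing.Theory Num.Theory.
Set Implicit Arguments. Unset Strict Implicit. Unset Printing Implicit Defensive.
Local Open Scope ring_scope.

Section S.
Variable R : realType.
Local Notation C := (R[i]).
Local Notation cR := (real_complex R).
Lemma conjE (x : C) : Num.conj x = conjc x.
Proof. reflexivity. Qed.
Local Open Scope sesquilinear_scope.

Lemma herm_of_sym n (A : 'M[R]_n) : A^T = A -> map_mx cR A \is hermsymmx.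
Proof.
move=> hA; rewrite qualifE /= expr0 scale1r; apply/eqP/matrixP => i j.
by rewrite !mxE conjE conjc_real -{1}hA mxE.
Qed.

Lemma spec0 n (A : 'M[R]_n) : A^T = A ->
  exists (P : 'M[C]_n) (d : 'I_n -> R),
   [/\ P *m P^t* = 1%:M, P^t* *m P = 1%:M &
       map_mx cR A = P^t* *m diag_mx (\row_i cR (d i)) *m P].
Proof.
move=> hA; have hH := herm_of_sym hA.
set Ac := map_mx cR A.
have /orthomx_spectralP hE := hermitian_normalmx hH.
have hU := spectral_unitarymx Ac.
have hr := hermitian_spectral_diag_real hH.
set P := spectralmx Ac in hE hU *.
set sp := spectral_diag Ac in hE hr *.
have hd : sp = \row_i cR (complex.Re (sp 0 i)).
  apply/rowP => i; rewrite mxE.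
  have /mxOverP/(_ 0 i) := hr.
  move/Creal_ImP; rewrite -complexIm.
  case: (sp 0 i) => a b /= hb.
  by have -> : b = 0 by case: hb.
exists P, (fun i => complex.Re (sp 0 i)).
split.
- exact/unitarymxP.
- by rewrite -invmx_unitary // mulVmx // unitarymx_unit.
rewrite -(invmx_unitary hU) -hd; exact: hE.
Qed.
Lemma ReD (x y : C) : complex.Re (x + y) = complex.Re x + complex.Re y.
Proof. by case: x; case: y. Qed.
Lemma Re_sum (I : Type) (r : seq I) (P : pred I) (F : I -> C) :
  complex.Re (\sum_(i <- r | P i) F i) = \sum_(i <- r | P i) complex.Re (F i).
Proof. by elim/big_rec2: _ => //= i y1 y2 _ <-; rewrite ReD. Qed.
Lemma Re_cmul (p q : C) (x : R) :
  complex.Re (conjc p * cR x * q) = x * (complex.Re p * complex.Re q + complex.Im p * complex.Im q).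
Proof. case: p => a b; case: q => c e /=. rewrite /=. ring. Qed.
Definition G n (P : 'M[C]_n) i j l :=
  complex.Re (P i j) * complex.Re (P i l) + complex.Im (P i j) * complex.Im (P i l).
Lemma entry_conj n (P : 'M[C]_n) (d : 'I_n -> R) j l :
  (P^t* *m diag_mx (\row_i cR (d i)) *m P) j l = \sum_i conjc (P i j) * cR (d i) * P i l.
Proof.
rewrite mul_mx_diag mxE; apply: eq_bigr => i _; rewrite !mxE.
by [].
Qed.
Lemma specC1 n (A : 'M[R]_n) (P : 'M[C]_n) (d : 'I_n -> R) :
  map_mx cR A = P^t* *m diag_mx (\row_i cR (d i)) *m P ->
  forall j l, A j l = \sum_i d i * G P i j l.
Proof.
move=> /matrixP hE j l; have := hE j l; rewrite entry_conj mxE => /(congr1 (@complex.Re R)) /=.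
by rewrite Re_sum => ->; apply: eq_bigr => i _; rewrite Re_cmul.
Qed.
Lemma specC2 n (P : 'M[C]_n) :
  P^t* *m P = 1%:M -> forall j l, (j == l)%:R = \sum_i G P i j l :> R.
Proof.
move=> /matrixP hE j l; have := hE j l.
have -> : P^t* = P^t* *m diag_mx (\row_i cR 1) *m 1%:M.
  rewrite mulmx1; apply/matrixP => a b; rewrite mul_mx_diag !mxE rmorph1 mulr1 //.
rewrite mulmx1 entry_conj mxE => /(congr1 (@complex.Re R)) /=.
rewrite Re_sum => hh.
have -> : (j == l)%:R = complex.Re ((j == l)%:R : C) by case: (j == l).
rewrite -hh; apply: eq_bigr => i _; rewrite Re_cmul mul1r //.
Qed.
Lemma specC3 n (A : 'M[R]_n) (P : 'M[C]_n) (d : 'I_n -> R) :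
  P *m P^t* = 1%:M -> P^t* *m P = 1%:M ->
  map_mx cR A = P^t* *m diag_mx (\row_i cR (d i)) *m P ->
  char_poly A = \prod_i ('X - (d i)%:P).
Proof.
move=> h1 h2 hE.
apply: (@map_poly_inj _ _ cR).
rewrite map_char_poly hE rmorph_prod /=.
under [RHS]eq_bigr => i _ do rewrite map_polyXsubC.
set Q := P^t*; set D := diag_mx _.
have -> : \prod_i ('X - (cR (d i))%:P) = char_poly D.
  rewrite char_poly_trig ?diag_mx_is_trig //; apply: eq_bigr => i _.
  by rewrite /D !mxE eqxx mulr1n.
rewrite /char_poly /char_poly_mx !map_mxM.
set Q' := map_mx polyC Q; set P' := map_mx polyC P; set D' := map_mx polyC D.
have hQP : Q' *m P' = 1%:M by rewrite -map_mxM h2 map_mx1.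
have {1}-> : 'X%:M = Q' *m 'X%:M *m P' :> 'M[{poly C}]_n.
  by rewrite mul_mx_scalar -scalemxAl hQP scalemx1.
rewrite -mulmxBl -mulmxBr !det_mulmx mulrC mulrA -det_mulmx.
rewrite [P' *m Q']mulmx1C // det1 mul1r. reflexivity.
Qed.
Lemma conjR (a : R) : Num.conj (cR a) = cR a.
Proof. by rewrite conjE conjc_real. Qed.
Lemma Re_cmul1 (p q : C) :
  complex.Re (Num.conj p * q) = complex.Re p * complex.Re q + complex.Im p * complex.Im q.
Proof. case: p => a b; case: q => c e /=. ring. Qed.
Lemma tcE n m (P : 'M[C]_(n,m)) i j : (P^t*) i j = Num.conj (P j i).
Proof. by rewrite !mxE. Qed.

Lemma specC4 n (A : 'M[R]_n) (P : 'M[C]_n) (d : 'I_n -> R) :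
  P *m P^t* = 1%:M -> P^t* *m P = 1%:M ->
  map_mx cR A = P^t* *m diag_mx (\row_i cR (d i)) *m P ->
  forall (x : 'cV[R]_n) (lam : R) (k : 'I_n), A *m x = lam *: x ->
  \sum_j x j 0 ^+ 2 = 1 -> (forall i, i != k -> d i != lam) ->
  forall j l, G P k j l = x j 0 * x l 0.
Proof.
move=> h1 h2 hE x lam k hAx hxn hdk.
have hPA : P *m map_mx cR A = diag_mx (\row_i cR (d i)) *m P.
  by rewrite hE !mulmxA h1 mul1mx.
set xc := map_mx cR x; set w := P *m xc.
have hAxc : map_mx cR A *m xc = cR lam *: xc by rewrite -map_mxM hAx map_mxZ.
have hDw : diag_mx (\row_i cR (d i)) *m w = cR lam *: w.
  by rewrite /w mulmxA -hPA -mulmxA hAxc -scalemxAr.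
have hw : forall i, i != k -> w i 0 = 0.
  move=> i hik; move/matrixP: hDw => /(_ i 0).
  rewrite mul_diag_mx !mxE => /eqP; rewrite -subr_eq0 -mulrBl mulf_eq0 => /orP[|/eqP//].
  by rewrite -rmorphB fmorph_eq0 subr_eq0 (negPf (hdk i hik)).
have hxw : xc = P^t* *m w by rewrite /w mulmxA h2 mul1mx.
have hx : forall j, xc j 0 = Num.conj (P k j) * w k 0.
  move=> j; rewrite {1}hxw mxE (bigD1 k) //= big1 ?addr0 ?tcE //.
  by move=> i hik; rewrite hw // mulr0.
have hn : Num.conj (w k 0) * w k 0 = 1.
  have : (w^t* *m w) 0 0 = (xc^t* *m xc) 0 0.
    by rewrite /w trmx_mul map_mxM mulmxA -[_ *m P^t* *m P]mulmxA h2 mulmx1.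
  rewrite !mxE (bigD1 k) //= big1 ?addr0; last first.
    by move=> i hik; rewrite hw // mulr0.
  rewrite !mxE => ->.
  have : cR (\sum_j x j 0 ^+ 2) = 1 by rewrite hxn rmorph1.
  rewrite rmorph_sum => <-; apply: eq_bigr => j _.
  by rewrite !mxE conjR rmorphXn expr2.
move=> j l.
have : cR (x j 0 * x l 0) = Num.conj (P k j) * P k l.
  have -> : cR (x j 0 * x l 0) = xc j 0 * Num.conj (xc l 0) by rewrite !mxE conjR rmorphM.
  rewrite !hx rmorphM /= conjCK.
  rewrite mulrCA !mulrA -[_ * Num.conj (w k 0)]mulrA [w k 0 * _]mulrC hn mulr1 mulrC; reflexivity.
move=> /(congr1 (@complex.Re R)) h.
by rewrite /G -Re_cmul1 -h.
Qed.
Lemma quadE n (Y : 'M[R]_n) (v : 'cV[R]_n) :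
  (v^T *m Y *m v) 0 0 = \sum_j \sum_l v j 0 * Y j l * v l 0.
Proof.
rewrite mxE; under eq_bigr => l _ do rewrite mxE mulr_suml.
rewrite exchange_big; apply: eq_bigr => j _; apply: eq_bigr => l _.
by rewrite !mxE.
Qed.

Lemma spec_pkg n (A : 'M[R]_n) : A^T = A ->
  exists (d : 'I_n -> R) (g : 'I_n -> 'I_n -> 'I_n -> R),
 [/\ char_poly A = \prod_i ('X - (d i)%:P),
     forall j l, A j l = \sum_i d i * g i j l,
     forall j l, (j == l)%:R = \sum_i g i j l :> R,
     forall i (Y : 'M[R]_n), psd Y -> 0 <= \sum_j \sum_l Y j l * g i j l
   & forall (x : 'cV[R]_n) lam k, A *m x = lam *: x -> \sum_j x j 0 ^+ 2 = 1 ->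
       (forall i, i != k -> d i != lam) -> forall j l, g k j l = x j 0 * x l 0].
Proof.
move=> hA; have [P [d [h1 h2 hE]]] := spec0 hA.
exists d, (G P); split.
- exact: specC3 h1 h2 hE.
- exact: specC1 hE.
- exact: specC2 h2.
- move=> i Y hY.
  pose a : 'cV[R]_n := \col_j complex.Re (P i j).
  pose b : 'cV[R]_n := \col_j complex.Im (P i j).
  have -> : \sum_j \sum_l Y j l * G P i j l =
            (a^T *m Y *m a) 0 0 + (b^T *m Y *m b) 0 0.
    rewrite !quadE -big_split; apply: eq_bigr => j _.
    rewrite -big_split; apply: eq_bigr => l _; rewrite /G !mxE /=; ring.
  by apply: addr_ge0; apply: hY.
- move=> x lam k hx hxn hd j l; apply: (specC4 h1 h2 hE hx hxn hd).
Qed.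
Lemma eigs_spec n (A : 'M[R]_n) (d : 'I_n -> R) :
  char_poly A = \prod_i ('X - (d i)%:P) ->
  sorted (fun x y => y <= x) (eigs A) /\ perm_eq (eigs A) [seq d i | i <- enum 'I_n].
Proof.
move=> hc.
have hprod : \prod_(x <- [seq d i | i <- enum 'I_n]) ('X - x%:P) = char_poly A.
  by rewrite big_map big_enum /= hc.
have hex : exists s, is_spectrum A s.
  exists (sort (fun x y => y <= x) [seq d i | i <- enum 'I_n]); split.
    by apply: sort_sorted => x y; rewrite le_total.
  by rewrite -hprod; apply: perm_big; rewrite perm_sym perm_sort.
have [hs hcs] := epsilon_spec (inhabits [::]) (is_spectrum A) hex.
split=> //; apply: prod_XsubC_eq; rewrite -hcs hprod //.
Qed.

Lemma sorted_head (s : seq R) y : sorted (fun x y => y <= x) s -> y \in s -> y <= nth 0 s 0.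
Proof.
case: s => [//|a s] /= hs; rewrite inE => /orP[/eqP->//|ys].
have /allP := order_path_min (fun y x z (h1 : y <= x) (h2 : z <= y) => le_trans h2 h1) hs.
by move=> /(_ y ys).
Qed.

Lemma lam1_ge n (A : 'M[R]_n) (d : 'I_n -> R) :
  char_poly A = \prod_i ('X - (d i)%:P) -> forall i, d i <= lam 1 A.
Proof.
move=> hc i; have [hs hp] := eigs_spec hc.
apply: sorted_head => //; rewrite (perm_mem hp); apply: map_f; exact: mem_enum.
Qed.
Lemma gap_idx n (A : 'M[R]_n) (d : 'I_n -> R) :
  char_poly A = \prod_i ('X - (d i)%:P) -> lam 2 A < lam 1 A ->
  exists k, d k = lam 1 A /\ forall i, i != k -> d i <= lam 2 A.
Proof.
move=> hc; have [hs hp] := eigs_spec hc; rewrite /lam /=.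
move: hs hp; case: (eigs A) => [|a s'] /=; first by rewrite ltxx.
move=> hs hp hgap; set b := nth 0 s' 0 in hgap *.
have hall : forall y, y \in s' -> y <= b.
  move=> y ys; apply: sorted_head => //; exact: path_sorted hs.
have hmem : forall y, y \in a :: s' -> b < y -> y = a.
  move=> y; rewrite inE => /orP[/eqP//|ys]; by rewrite ltNge hall.
have hcnt : count (fun y => b < y) (a :: s') = 1%N.
  rewrite /= hgap add1n; congr S; apply/eqP; rewrite -leqn0 leqNgt -has_count.
  by apply/hasPn => y ys; rewrite -leNgt hall.
have /permP/(_ (fun y => b < y)) := hp; rewrite hcnt count_map.
rewrite -sum1_count big_enum_cond /= sum1_card => /esym/eqP/card1P [k hk].
exists k; split.
  apply: hmem; first by rewrite (perm_mem hp); apply: map_f; exact: mem_enum.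
  by have := hk k; rewrite !inE eqxx.
move=> i hik; rewrite leNgt; have := hk i; rewrite !inE (negPf hik) /=.
move=> h; apply/negP => hb; move: h; change ((b < d i) = false -> False); by rewrite hb.
Qed.
Definition ip n (A Y : 'M[R]_n) := \sum_j \sum_l A j l * Y j l.

Lemma ip_decomp n (Y : 'M[R]_n) (w : 'I_n -> 'I_n -> R) (c : 'I_n -> R)
  (g : 'I_n -> 'I_n -> 'I_n -> R) :
  (forall j l, w j l = \sum_i c i * g i j l) ->
  \sum_j \sum_l w j l * Y j l = \sum_i c i * (\sum_j \sum_l Y j l * g i j l).
Proof.
move=> hw.
transitivity (\sum_j \sum_i c i * (\sum_l Y j l * g i j l)).
  apply: eq_bigr => j _.
  under eq_bigr => l _ do rewrite hw mulr_suml.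
  rewrite exchange_big; apply: eq_bigr => i _; rewrite mulr_sumr.
  by apply: eq_bigr => l _; rewrite mulrCA mulrC mulrA.
rewrite exchange_big; apply: eq_bigr => i _; by rewrite mulr_sumr.
Qed.

Lemma trace_ip n (Y : 'M[R]_n) : \tr Y = \sum_j \sum_l (j == l)%:R * Y j l.
Proof.
apply: eq_bigr => j _; rewrite (bigD1 j) //= eqxx mul1r big1 ?addr0 //.
by move=> l; rewrite eq_sym => /negPf->; rewrite mul0r.
Qed.

Lemma bound1 n (A : 'M[R]_n) (Y : 'M[R]_n) : A^T = A -> psd Y ->
  ip A Y <= lam 1 A * \tr Y.
Proof.
move=> hA hY; have [d [g [hc hAd hI hg _]]] := spec_pkg hA.
rewrite /ip (ip_decomp Y hAd) trace_ip.
rewrite (@ip_decomp n Y (fun j l => (j == l)%:R) (fun _ => 1) g); last first.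
  by move=> j l; rewrite hI; apply: eq_bigr => i _; rewrite mul1r.
rewrite mulr_sumr; apply: ler_sum => i _; rewrite /= mul1r.
by apply: ler_wpM2r; [exact: hg | exact: lam1_ge hc i].
Qed.

Lemma split_ineq n (d r : 'I_n -> R) k l1 l2 : (forall i, 0 <= r i) -> d k = l1 ->
  (forall i, i != k -> d i <= l2) ->
  \sum_i d i * r i <= l2 * \sum_i 1 * r i + (l1 - l2) * r k.
Proof.
move=> hr hk hi; rewrite (bigD1 k) //= [\sum_i 1 * r i](bigD1 k) //= hk mul1r.
have : \sum_(i | i != k) d i * r i <= l2 * \sum_(i | i != k) 1 * r i.
  rewrite mulr_sumr; apply: ler_sum => i hik; rewrite mul1r; apply: ler_wpM2r => //.
  exact: hi.
move: (\sum_(i | i != k) d i * r i) (\sum_(i | i != k) 1 * r i) => a b h.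
rewrite mulrDr; lra.
Qed.

Lemma bound2 n (A : 'M[R]_n) (Y : 'M[R]_n) (x : 'cV[R]_n) : A^T = A -> psd Y ->
  A *m x = lam 1 A *: x -> \sum_j x j 0 ^+ 2 = 1 -> lam 2 A < lam 1 A ->
  ip A Y <= lam 2 A * \tr Y +
            (lam 1 A - lam 2 A) * \sum_j \sum_l Y j l * (x j 0 * x l 0).
Proof.
move=> hA hY hx hxn hgap; have [d [g [hc hAd hI hg hgx]]] := spec_pkg hA.
have [k [hk hi]] := gap_idx hc hgap.
have hgk := hgx x (lam 1 A) k hx hxn
  (fun i hik => negbT (lt_eqF (le_lt_trans (hi i hik) hgap))).
have -> : \sum_j \sum_l Y j l * (x j 0 * x l 0) = \sum_j \sum_l Y j l * g k j l.
  by apply: eq_bigr => j _; apply: eq_bigr => l _; rewrite hgk.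
rewrite /ip (ip_decomp Y hAd) trace_ip.
rewrite (@ip_decomp n Y (fun j l => (j == l)%:R) (fun _ => 1) g); last first.
  by move=> j l; rewrite hI; apply: eq_bigr => i _; rewrite mul1r.
apply: (split_ineq (r := fun i => \sum_j \sum_l Y j l * g i j l)) => //.
move=> i; exact: hg.
Qed.

End S.

Section S2.
Variable R : realType.
Implicit Types (n : nat).

Definition bil n (Y : 'M[R]_n) (u w : 'I_n -> R) := \sum_j \sum_l u j * Y j l * w l.

Lemma psd_bil n (Y : 'M[R]_n) (f : 'I_n -> R) : psd Y -> 0 <= bil Y f f.
Proof.
move=> hY; have := hY (\col_i f i); rewrite quadE /bil.
by under eq_bigr => j _ do under eq_bigr => l _ do rewrite !mxE.
Qed.

Lemma bil_sym n (Y : 'M[R]_n) u w : Y^T = Y -> bil Y u w = bil Y w u.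
Proof.
move=> hY; rewrite /bil exchange_big; apply: eq_bigr => j _; apply: eq_bigr => l _.
by rewrite -{1}hY mxE mulrC [u l * _]mulrC mulrA.
Qed.

Lemma bil_expand n (Y : 'M[R]_n) u w (t : R) : Y^T = Y ->
  bil Y (fun j => w j + t * u j) (fun j => w j + t * u j) =
  bil Y w w + 2 * t * bil Y u w + t ^+ 2 * bil Y u u.
Proof.
move=> hY.
have -> : 2 * t * bil Y u w = t * bil Y u w + t * bil Y w u.
  by rewrite (bil_sym _ _ hY); ring.
rewrite /bil !mulr_sumr -!big_split; apply: eq_bigr => j _.
rewrite !mulr_sumr -!big_split; apply: eq_bigr => l _ /=; ring.
Qed.

Lemma psd_null n (Y : 'M[R]_n) (w : 'I_n -> R) : Y^T = Y -> psd Y ->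
  bil Y w w = 0 -> forall k, \sum_l Y k l * w l = 0.
Proof.
move=> hs hY hw.
pose u := fun j => \sum_l Y j l * w l.
have ha : bil Y u w = \sum_j u j ^+ 2.
  rewrite /bil; apply: eq_bigr => j _; rewrite expr2 /u mulr_sumr.
  by apply: eq_bigr => l _; rewrite mulrA.
have hb : 0 <= bil Y u u by apply: psd_bil.
set a := bil Y u w in ha; set b := bil Y u u in hb.
have ht : forall t : R, 0 <= 2 * t * a + t ^+ 2 * b.
  move=> t; have := psd_bil (fun j => w j + t * u j) hY.
  by rewrite bil_expand // hw add0r.
have ha0 : a = 0.
  have := ht (- a / (b + 1)).
  have hb1 : 0 < b + 1 by lra.
  set t := - a / (b + 1).
  have -> : a = - t * (b + 1) by rewrite /t mulNr divfK ?opprK // gt_eqF.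
  move=> h; have : t ^+ 2 * (b + 2) <= 0 by nra.
  move=> h2; have : t ^+ 2 <= 0 by nra.
  move=> h3; have : t = 0 by nra.
  by move=> ->; rewrite oppr0 mul0r.
move=> k; have := ha; rewrite ha0 => /esym /eqP; rewrite psumr_eq0 ?sqr_ge0 //.
  by move=> /allP /(_ k (mem_index_enum _)) /=; rewrite /u sqrf_eq0 => /eqP.
by move=> i _; rewrite sqr_ge0.
Qed.
Lemma deltaL n (F : 'I_n -> R) j : \sum_i (j == i)%:R * F i = F j.
Proof.
rewrite (bigD1 j) //= eqxx mul1r big1 ?addr0 // => i hij.
by rewrite eq_sym (negPf hij) mul0r.
Qed.

Lemma wsum n (x : 'I_n -> R) j l : \sum_j x j ^+ 2 = 1 ->
  \sum_i ((j == i)%:R - x i * x j) * ((l == i)%:R - x i * x l) =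
  (j == l)%:R - x j * x l.
Proof.
move=> hx.
under eq_bigr => i _ do rewrite mulrBl.
rewrite sumrB deltaL.
have -> : \sum_i x i * x j * ((l == i)%:R - x i * x l) =
          x j * (\sum_i (l == i)%:R * x i - x l * \sum_i x i ^+ 2).
  rewrite mulr_sumr -sumrB mulr_sumr; apply: eq_bigr => i _; ring.
rewrite deltaL hx mulr1 subrr mulr0 subr0 eq_sym //.
Qed.

Lemma psd_rank1 n (Y : 'M[R]_n) (x : 'I_n -> R) : Y^T = Y -> psd Y ->
  \tr Y = 1 -> \sum_j x j ^+ 2 = 1 ->
  1 <= \sum_j \sum_l Y j l * (x j * x l) -> forall k l, Y k l = x k * x l.
Proof.
move=> hs hY htr hx hq.
set q := \sum_j \sum_l Y j l * (x j * x l) in hq.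
pose w := fun i j => (j == i)%:R - x i * x j.
have hS : \sum_i bil Y (w i) (w i) = \tr Y - q.
  rewrite /bil.
  transitivity (\sum_j \sum_l Y j l * ((j == l)%:R - x j * x l)).
    rewrite exchange_big; apply: eq_bigr => j _.
    rewrite exchange_big; apply: eq_bigr => l _.
    rewrite -(wsum j l hx) mulr_sumr; apply: eq_bigr => i _; rewrite /w; ring.
  rewrite trace_ip /q -sumrB; apply: eq_bigr => j _; rewrite -sumrB.
  by apply: eq_bigr => l _; ring.
have hge : forall i, 0 <= bil Y (w i) (w i) by move=> i; apply: psd_bil.
have h0 : forall i, bil Y (w i) (w i) = 0.
  have hz : \sum_i bil Y (w i) (w i) = 0.
    apply/le_anti; rewrite sumr_ge0 // andbT hS htr; lra.
  move=> i; move/eqP: hz; rewrite psumr_eq0 // => /allP /(_ i (mem_index_enum _)).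
  by move=> /eqP.
pose y := fun k => \sum_l Y k l * x l.
have hY0 : forall i k, Y k i = x i * y k.
  move=> i k; have := psd_null hs hY (h0 i) k.
  under eq_bigr => l _ do rewrite /w mulrBr.
  rewrite sumrB.
  under eq_bigr => l _ do rewrite mulrC eq_sym.
  rewrite deltaL => /eqP; rewrite subr_eq0 => /eqP ->.
  rewrite /y mulr_sumr; apply: eq_bigr => l _; ring.
have hxy : forall i k, x i * y k = x k * y i.
  by move=> i k; rewrite -hY0 -hY0 -{1}hs mxE.
have hxq : \sum_i x i * y i = q.
  rewrite /q; apply: eq_bigr => j _; rewrite /y mulr_sumr; apply: eq_bigr => l _; ring.
have hyk : forall k, y k = x k * q.
  move=> k; rewrite -hxq mulr_sumr -[y k]mulr1 -hx mulr_sumr.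
  apply: eq_bigr => i _; have h := hxy i k.
  transitivity (x i * (x k * y i)); last by ring.
  by rewrite -h; ring.
have hq1 : q = 1.
  rewrite -htr /mxtrace -[q]mulr1 -hx mulr_sumr; apply: eq_bigr => k _.
  by rewrite hY0 hyk; ring.
by move=> k l; rewrite hY0 hyk hq1; ring.
Qed.
End S2.

Section S3.
Variable R : realType.

Lemma sum_J d (J : {set 'I_d}) (F : 'I_d -> R) :
  (forall i, i \notin J -> F i = 0) -> \sum_i F i = \sum_(k < #|J|) F (subidx k).
Proof.
move=> hF; rewrite (bigID (mem J)) /= [X in _ + X]big1 ?addr0; last first.
  by move=> i hi; apply: hF.
by rewrite big_enum_val.
Qed.

Lemma sum2_J d (J : {set 'I_d}) (F : 'I_d -> 'I_d -> R) :
  (forall i j, (i \notin J) || (j \notin J) -> F i j = 0) ->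
  \sum_i \sum_j F i j = \sum_(k < #|J|) \sum_(l < #|J|) F (subidx k) (subidx l).
Proof.
move=> hF; rewrite (sum_J (J := J)); last first.
  by move=> i hi; apply: big1 => j _; apply: hF; rewrite hi.
apply: eq_bigr => k _; apply: sum_J => j hj; apply: hF; by rewrite hj orbT.
Qed.

Lemma subidxJ d (J : {set 'I_d}) (k : 'I_#|J|) : subidx k \in J.
Proof. exact: enum_valP. Qed.

Lemma subidx_inj d (J : {set 'I_d}) : injective (@subidx d J).
Proof. exact: enum_val_inj. Qed.

Lemma subidx_onto d (J : {set 'I_d}) i : i \in J -> exists k : 'I_#|J|, subidx k = i.
Proof. by move=> hi; exists (enum_rank_in hi i); rewrite /subidx enum_rankK_in. Qed.

Lemma subME d (B : 'M[R]_d) (I K : {set 'I_d}) k l :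
  subM B I K k l = B (subidx k) (subidx l).
Proof. by rewrite mxE. Qed.
End S3.

Theorem mainTheorem4 (R : realType) (d : nat) (hd : (2 <= d)%N)
  (Mstar : 'M[R]_d) (hMs : Mstar^T = Mstar)
  (hgap : lam 2 Mstar < lam 1 Mstar)
  (u1 : 'cV[R]_d) (hu1 : Mstar *m u1 = lam 1 Mstar *: u1)
  (hu1n : \sum_i u1 i 0 ^+ 2 = 1)
  (J : {set 'I_d}) (hJ : J = [set i | u1 i 0 != 0]) (hs : (2 <= #|J|)%N)
  (M : 'M[R]_d) (hM : M^T = M) (rho : R) (hrho : 0 < rho)
  (zhat : 'cV[R]_#|J|) (hz : forall k, zhat k 0 = Num.sg (u1 (subidx k) 0))
  (xhat : 'cV[R]_#|J|) (hxn : \sum_k xhat k 0 ^+ 2 = 1)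
  (hxe : (subM M J J - rho *: (zhat *m zhat^T)) *m xhat
           = lam 1 (subM M J J - rho *: (zhat *m zhat^T)) *: xhat)
  (Zhat : 'M[R]_d) (hZs : Zhat^T = Zhat)
  (hZJJ : subM Zhat J J = zhat *m zhat^T)
  (h1 : (forall k, Num.sg (u1 (subidx k) 0) = Num.sg (xhat k 0)) \/
        (forall k, Num.sg (u1 (subidx k) 0) = - Num.sg (xhat k 0)))
  (h2a : (subM M (~: J) J - rho *: subM Zhat (~: J) J) *m xhat = 0)
  (h2b : forall i j, `|subM Zhat (~: J) J i j| < 1)
  (h3a : lam 1 (subM M J J - rho *: (zhat *m zhat^T)) = lam 1 (M - rho *: Zhat))
  (h3b : forall i j, `|subM Zhat (~: J) (~: J) i j| < 1)
  (h4 : lam 2 (subM M J J - rho *: (zhat *m zhat^T))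
          < lam 1 (subM M J J - rho *: (zhat *m zhat^T)))
  (Xhat : 'M[R]_d)
  (hXJJ : forall k l, Xhat (subidx k) (subidx l) = xhat k 0 * xhat l 0)
  (hX0 : forall i j, (i \notin J) || (j \notin J) -> Xhat i j = 0) :
  unique_optimal M rho Xhat /\ [set i | Xhat i i != 0] = J.
Proof.
have hu : forall k : 'I_#|J|, u1 (subidx k) 0 != 0.
  move=> k; have : subidx k \in [set i | u1 i 0 != 0] by rewrite -hJ; exact: subidxJ k.
  by rewrite inE.
have hzz : forall k, zhat k 0 ^+ 2 = 1 by move=> k; rewrite hz sqr_sg hu.
have hzn : forall k, `|zhat k 0| = 1.
  by move=> k; rewrite hz normr_sg hu.
have [eps [heps hsx]] : exists eps : R, eps ^+ 2 = 1 /\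
    forall k, Num.sg (xhat k 0) = eps * zhat k 0.
  case: h1 => h; [exists 1 | exists (-1)]; split; rewrite ?sqrrN ?expr1n //.
    by move=> k; rewrite mul1r hz h.
  by move=> k; rewrite hz h mulN1r opprK.
have hxnz : forall k, xhat k 0 != 0.
  move=> k; rewrite -sgr_eq0 hsx mulf_eq0 negb_or; apply/andP; split.
    apply/negP => /eqP h0; move: heps; rewrite h0 expr0n /= => /eqP; by rewrite eq_sym oner_eq0.
  by rewrite hz sgr_eq0 hu.
have habs : forall k l, `|xhat k 0 * xhat l 0| = zhat k 0 * zhat l 0 * (xhat k 0 * xhat l 0).
  move=> k l; rewrite normrM !normrEsg !hsx.
  have : eps * eps = 1 by rewrite -expr2.
  move=> he; transitivity ((eps * eps) * (zhat k 0 * zhat l 0 * (xhat k 0 * xhat l 0))); last by rewrite he mul1r.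
  ring.
have hZJ : forall k l, Zhat (subidx k) (subidx l) = zhat k 0 * zhat l 0.
  move=> k l; have := hZJJ; move/matrixP/(_ k l); rewrite subME => ->.
  by rewrite !mxE big_ord1 !mxE.
have hZc : forall i j, i \notin J -> j \in J -> `|Zhat i j| < 1.
  move=> i j hi hj; have hi' : i \in ~: J by rewrite inE.
  have [p hp] := subidx_onto hi'; have [q hq] := subidx_onto hj.
  by have := h2b p q; rewrite subME hp hq.
have hZlt : forall i j, (i \notin J) || (j \notin J) -> `|Zhat i j| < 1.
  move=> i j; case: (boolP (i \in J)) => hi; case: (boolP (j \in J)) => hj //= _.
  - have -> : Zhat i j = Zhat j i by rewrite -{1}hZs mxE.
    exact: hZc.
  - exact: hZc.
  - have hi' : i \in ~: J by rewrite inE.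
    have hj' : j \in ~: J by rewrite inE.
    have [p hp] := subidx_onto hi'; have [q hq] := subidx_onto hj'.
    by have := h3b p q; rewrite subME hp hq.
have hZle : forall i j, `|Zhat i j| <= 1.
  move=> i j; case: (boolP ((i \notin J) || (j \notin J))) => h.
    exact: ltW (hZlt _ _ h).
  move: h; rewrite negb_or !negbK => /andP[hi hj].
  have [k <-] := subidx_onto hi; have [l <-] := subidx_onto hj.
  by rewrite hZJ normrM !hzn mulr1.
have hXs : Xhat^T = Xhat.
  apply/matrixP => i j; rewrite mxE.
  case: (boolP ((i \notin J) || (j \notin J))) => h.
    by rewrite !hX0 // orbC.
  move: h; rewrite negb_or !negbK => /andP[hi hj].
  have [k <-] := subidx_onto hi; have [l <-] := subidx_onto hj.
  by rewrite !hXJJ mulrC.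
have hXpsd : psd Xhat.
  move=> v; rewrite quadE (sum2_J (J:=J)); last first.
    by move=> i j h; rewrite hX0 // mulr0 mul0r.
  have -> : \sum_(k < #|J|) \sum_(l < #|J|) v (subidx k) 0 * Xhat (subidx k) (subidx l) * v (subidx l) 0
       = (\sum_(k < #|J|) v (subidx k) 0 * xhat k 0) ^+ 2.
    rewrite expr2 mulr_suml; apply: eq_bigr => k _; rewrite mulr_sumr.
    by apply: eq_bigr => l _; rewrite hXJJ; ring.
  exact: sqr_ge0.
have hXtr : \tr Xhat = 1.
  rewrite /mxtrace (sum_J (J:=J)); last by move=> i hi; rewrite hX0 // hi.
  by rewrite -hxn; apply: eq_bigr => k _; rewrite hXJJ expr2.
set Bm := M - rho *: Zhat.
set A := subM M J J - rho *: (zhat *m zhat^T).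
have hAB : forall k l, A k l = Bm (subidx k) (subidx l).
  move=> k l; rewrite /A /Bm [LHS]mxE [RHS]mxE subME; congr (_ + _).
  by rewrite !mxE big_ord1 !mxE hZJ.
have hBs : Bm^T = Bm by rewrite /Bm linearB linearZ /= hM hZs.
have hAs : A^T = A.
  by apply/matrixP => k l; rewrite mxE !hAB -{1}hBs mxE.
have hobjX : sdp_obj M rho Xhat = lam 1 A.
  rewrite /sdp_obj (sum2_J (J:=J) (F := fun i j => M i j * Xhat i j)); last first.
    by move=> i j h; rewrite hX0 // mulr0.
  rewrite (sum2_J (J:=J) (F := fun i j => `|Xhat i j|)); last first.
    by move=> i j h; rewrite hX0 // normr0.
  transitivity (\sum_(k < #|J|) \sum_(l < #|J|) A k l * (xhat k 0 * xhat l 0)).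
    rewrite mulr_sumr -sumrB; apply: eq_bigr => k _; rewrite mulr_sumr -sumrB.
    apply: eq_bigr => l _.
    rewrite !hXJJ habs hAB /Bm !mxE hZJ; ring.
  transitivity (\sum_(k < #|J|) xhat k 0 * (A *m xhat) k 0).
    apply: eq_bigr => k _; rewrite mxE mulr_sumr; apply: eq_bigr => l _; ring.
  rewrite hxe -[RHS]mulr1 -hxn mulr_sumr; apply: eq_bigr => k _; rewrite !mxE expr2; ring.
split; last first.
  apply/setP => i; rewrite inE; case: (boolP (i \in J)) => hi.
    have [k <-] := subidx_onto hi.
    by rewrite hXJJ mulf_eq0 negb_or !hxnz.
  by rewrite hX0 ?hi ?eqxx.
split; first by split; [|split].
move=> Y [hYs [hYp hYt]] hne; rewrite hobjX.
have hdiff : ip Bm Y - sdp_obj M rho Y =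
    rho * \sum_i \sum_j (`|Y i j| - Zhat i j * Y i j).
  have e : forall i j, Bm i j * Y i j =
      M i j * Y i j - rho * `|Y i j| + rho * (`|Y i j| - Zhat i j * Y i j).
    by move=> i j; rewrite /Bm !mxE; ring.
  rewrite /ip /sdp_obj.
  under eq_bigr => i _ do under eq_bigr => j _ do rewrite e.
  under eq_bigr => i _ do rewrite big_split sumrB /= -!mulr_sumr.
  rewrite big_split sumrB /= -!mulr_sumr; lra.
have hZY : forall i j, Zhat i j * Y i j <= `|Y i j|.
  move=> i j; apply: le_trans (ler_norm _) _; rewrite normrM.
  by apply: ler_piMl.
have hS0 : 0 <= \sum_i \sum_j (`|Y i j| - Zhat i j * Y i j).
  by apply: sumr_ge0 => i _; apply: sumr_ge0 => j _; rewrite subr_ge0.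
have hip : ip Bm Y <= lam 1 A.
  by rewrite h3a -[lam 1 Bm]mulr1 -hYt; exact: bound1 hBs hYp.
have hrS : 0 <= rho * \sum_i \sum_j (`|Y i j| - Zhat i j * Y i j).
  by apply: mulr_ge0 => //; apply: ltW.
have hle : sdp_obj M rho Y <= lam 1 A by lra.
rewrite lt_def hle andbT.
apply/negP => /eqP heq; apply: hne.
have hS : \sum_i \sum_j (`|Y i j| - Zhat i j * Y i j) = 0.
  apply/le_anti; rewrite hS0 andbT.
  move: hrS hdiff hip heq hS0; set S := \sum_i _ => hrS hdiff hip heq hS0.
  nra.
have hterm : forall i j, `|Y i j| - Zhat i j * Y i j = 0.
  have hge : forall i j, 0 <= `|Y i j| - Zhat i j * Y i j.
    by move=> i j; rewrite subr_ge0.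
  move=> i j.
  have hi : \sum_j (`|Y i j| - Zhat i j * Y i j) = 0.
    apply: (psumr_eq0P _ hS) => // k _; apply: sumr_ge0 => j' _; exact: hge.
  by apply: (psumr_eq0P _ hi) => // j' _; exact: hge.
have hYout : forall i j, (i \notin J) || (j \notin J) -> Y i j = 0.
  move=> i j h; have ht := hterm i j; have hzl := hZlt i j h.
  apply/normr0_eq0; apply/le_anti; rewrite normr_ge0 andbT.
  have h1' : `|Y i j| <= `|Zhat i j| * `|Y i j|.
    rewrite -normrM; apply: le_trans (ler_norm _); lra.
  have := normr_ge0 (Y i j); nra.
set Y' := subM Y J J.
have hY'e : forall k l, Y' k l = Y (subidx k) (subidx l) by move=> k l; rewrite subME.
have hY's : Y'^T = Y' by apply/matrixP => k l; rewrite mxE !hY'e -{1}hYs mxE.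
have hY'p : psd Y'.
  move=> v'.
  pose v : 'cV[R]_d := \col_i \sum_(k < #|J|) (subidx k == i)%:R * v' k 0.
  have hv1 : forall k, v (subidx k) 0 = v' k 0.
    move=> k; rewrite mxE (bigD1 k) //= eqxx mul1r big1 ?addr0 // => m hm.
    by rewrite (inj_eq (@subidx_inj _ _)) (negPf hm) mul0r.
  have hv0 : forall i, i \notin J -> v i 0 = 0.
    move=> i hi; rewrite mxE big1 // => m _; case: eqP => [he|]; last by rewrite mul0r.
    by move: hi; rewrite -he subidxJ.
  rewrite quadE.
  have -> : \sum_(k < #|J|) \sum_(l < #|J|) v' k 0 * Y' k l * v' l 0 =
            \sum_i \sum_j v i 0 * Y i j * v j 0.
    rewrite (sum2_J (J:=J)); last first.
      move=> i j /orP[hi|hj]; first by rewrite hv0 // !mul0r.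
      by rewrite (hv0 j) // mulr0.
    by apply: eq_bigr => k _; apply: eq_bigr => l _; rewrite !hv1 hY'e.
  by rewrite -quadE; apply: hYp.
have hY't : \tr Y' = 1.
  rewrite -hYt /mxtrace [RHS](sum_J (J:=J)); last first.
    by move=> i hi; apply: hYout; rewrite hi.
  by apply: eq_bigr => k _; rewrite hY'e.
have hipA : ip A Y' = ip Bm Y.
  rewrite /ip [RHS](sum2_J (J:=J)); last by move=> i j h; rewrite hYout // mulr0.
  by apply: eq_bigr => k _; apply: eq_bigr => l _; rewrite hAB hY'e.
have hb2 := bound2 hAs hY'p hxe hxn h4.
rewrite hY't mulr1 hipA in hb2.
set q := \sum_j \sum_l Y' j l * (xhat j 0 * xhat l 0) in hb2.
have hq : 1 <= q.
  have hlam : lam 1 A <= ip Bm Y by lra.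
  move: hb2 hlam h4; set a := lam 1 A; set b := lam 2 A; move=> hb2 hlam hab.
  nra.
have hrk := @psd_rank1 _ _ Y' (fun k => xhat k 0) hY's hY'p hY't hxn hq.
apply/matrixP => i j.
case: (boolP ((i \notin J) || (j \notin J))) => h; first by rewrite hYout // hX0.
move: h; rewrite negb_or !negbK => /andP[hi hj].
have [k <-] := subidx_onto hi; have [l <-] := subidx_onto hj.
by rewrite -hY'e hrk hXJJ.
Qed.
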